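(* Let $T$ be a continuous linear operator on a real or complex separable infinite-dimensional F-space $X$ and $\mathcal{F}$ a Furstenberg family. If there is an $\mathcal{F}$-recurrent vector $x$ for $T$ such that $\mathcal{C}_T(x)=\{Sx:S\in\mathcal{C}_T\}$ is dense in $X$, then for every $N\in\mathbb{N}$ the set $\mathcal{F}\mathrm{Rec}(T_{(N)})$ contains a dense infinite-dimensional vector subspace of $X^N$. In particular this holds whenever $T$ has a vector that is both $\mathcal{F}$-recurrent and cyclic, or $T$ has an $\mathcal{F}$-hypercyclic vector.
   Context: A Furstenberg family is a collection $\mathcal{F}$ of infinite subsets of $\mathbb{N}_0$, closed under supersets, with $A\cap[n,\infty)\in\mathcal{F}$ whenever $A\in\mathcal{F}$, $n\in\mathbb{N}$. $x$ is $\mathcal{F}$-recurrent if $\{n\geq0:T^nx\in U\}\in\mathcal{F}$ for every neighbourhood $U$ of $x$, and $\mathcal{F}$-hypercyclic if $\{n\geq0:T^nx\in U\}\in\mathcal{F}$ for every non-empty open $U\subset X$; $\mathcal{F}\mathrm{Rec}(\cdot)$ denotes the set of $\mathcal{F}$-recurrent vectors. $\mathcal{C}_T=\{S:X\to X \text{ continuous}:ST=TS\}$. $x$ is cyclic if $\mathrm{span}\{T^nx:n\geq0\}$ is dense. $T_{(N)}=T\oplus\cdots\oplus T$ on $X^N$. *)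

(* Defs.v *)
From HB Require Import structures.
From mathcomp Require Import all_boot all_order all_algebra.
From mathcomp Require Import all_classical all_reals all_analysis.
From mathcomp Require Import complex.

Set Implicit Arguments.
Unset Strict Implicit.
Unset Printing Implicit Defensive.

Import Order.TTheory GRing.Theory Num.Theory.
Local Open Scope classical_set_scope.
Local Open Scope ring_scope.

Definition RorC (R : realType) (b : bool) : numFieldType :=
  if b then (R : numFieldType) else ((R[i])%C : numFieldType).

Definition Fspace (R : realType) (K : numFieldType) (X : topologicalLmodType K)
  : Prop :=
  exists d : X -> X -> R,
    (forall x y, 0 <= d x y) /\
        (forall x y, d x y = 0 <-> x = y) /\
        (forall x y, d x y = d y x) /\
        (forall x y z, d x z <= d x y + d y z) /\
        (forall x y z, d (x + z) (y + z) = d x y) /\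
        (forall (x : X) (A : set X),
            nbhs x A <-> exists2 e : R, 0 < e & [set y | d x y < e] `<=` A) /\
        (forall u : nat -> X,
            (forall e : R, 0 < e -> exists N, forall m n,
                 (N <= m)%N -> (N <= n)%N -> d (u m) (u n) < e) ->
            exists l : X, u @ \oo --> l).

Definition separable_space (T : topologicalType) : Prop :=
  exists D : set T, countable D /\ dense D.

Definition lin_indep (K : numFieldType) (V : lmodType K) (n : nat)
  (v : 'I_n -> V) : Prop :=
  forall c : 'I_n -> K, \sum_(i < n) c i *: v i = 0 -> forall i, c i = 0.

Definition infinite_dimensional (K : numFieldType) (V : lmodType K) : Prop :=
  forall n, exists v : 'I_n -> V, lin_indep v.

Definition is_subspace (K : numFieldType) (V : lmodType K) (S : set V) : Prop :=
  [/\ S 0, (forall x y, S x -> S y -> S (x + y)) &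
      (forall (a : K) x, S x -> S (a *: x))].

Definition infdim_subspace (K : numFieldType) (V : lmodType K) (S : set V)
  : Prop :=
  forall n, exists v : 'I_n -> V, (forall i, S (v i)) /\ lin_indep v.

Definition Furstenberg_family (F : set (set nat)) : Prop :=
  [/\ (forall A, F A -> infinite_set A),
      (forall A B, F A -> A `<=` B -> F B) &
      (forall A n, F A -> F (A `&` [set k | (n <= k)%N]))].

Definition return_set (Y : Type) (f : Y -> Y) (x : Y) (U : set Y) : set nat :=
  [set n | U (iter n f x)].

Definition F_recurrent (F : set (set nat)) (Y : topologicalType) (f : Y -> Y)
  (x : Y) : Prop :=
  forall U : set Y, nbhs x U -> F (return_set f x U).

Definition FRec (F : set (set nat)) (Y : topologicalType) (f : Y -> Y)
  : set Y := [set x | F_recurrent F f x].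

Definition F_hypercyclic (F : set (set nat)) (Y : topologicalType) (f : Y -> Y)
  (x : Y) : Prop :=
  forall U : set Y, open U -> U !=set0 -> F (return_set f x U).

(** C_T: continuous (not necessarily linear) maps commuting with T. *)
Definition commutant (Y : topologicalType) (f : Y -> Y) : set (Y -> Y) :=
  [set S | continuous S /\ S \o f = f \o S].

Definition commutant_orbit (Y : topologicalType) (f : Y -> Y) (x : Y) : set Y :=
  [set S x | S in commutant f].

Definition orbit_span (K : numFieldType) (V : lmodType K) (f : V -> V) (x : V)
  : set V :=
  [set y | exists n (c : 'I_n -> K) (m : 'I_n -> nat),
             y = \sum_(i < n) c i *: iter (m i) f x].

Definition cyclic_vector (K : numFieldType) (X : topologicalLmodType K)
  (f : X -> X) (x : X) : Prop := dense (orbit_span f x).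

Definition power_space (X : Type) (N : nat) := {ptws 'I_N -> X}.

Definition diag_op (X : Type) (N : nat) (f : X -> X) :
  power_space X N -> power_space X N := fun v i => f (v i).

(* Main.v *)
Require Import Defs.
From HB Require Import structures.
From mathcomp Require Import all_boot all_order all_algebra.
From mathcomp Require Import all_classical all_reals all_analysis.
From mathcomp Require Import complex.
From mathcomp Require Import lra.
Import Order.TTheory GRing.Theory Num.Theory.
Local Open Scope classical_set_scope.
Local Open Scope ring_scope.
Set Implicit Arguments.
Unset Strict Implicit.
Unset Printing Implicit Defensive.

Definition cauchyK (K : numFieldType) (u : nat -> K) := forall e : K, 0 < e ->
  exists N, forall m n, (N <= m)%N -> (N <= n)%N -> `|u m - u n| < e.
Definition limK (K : numFieldType) (u : nat -> K) (l : K) := forall e : K, 0 < e ->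
  exists N, forall n, (N <= n)%N -> `|u n - l| < e.
Definition Kcomplete (K : numFieldType) := forall u : nat -> K, cauchyK u -> exists l, limK u l.

Lemma near_oo_P (P : nat -> Prop) : (\forall n \near \oo, P n) <-> exists N, forall n, (N <= n)%N -> P n.
Proof.
split => [[N _ HN]|[N HN]]; first by exists N.
by exists N.
Qed.

Lemma Kcomplete_real (R : realType) : Kcomplete R.
Proof.
move=> u Hu.
have : cvg ((u : nat -> R^o) @ \oo).
  apply/cauchy_cvgP; apply: cauchy_exP => e e0.
  have [N HN] := Hu e e0.
  exists (u N); apply/near_oo_P; exists N => n Nn.
  by rewrite /ball /=; apply: HN.
move=> /cvgrPdist_lt H; exists (lim ((u : nat -> R^o) @ \oo)) => e e0.
have /near_oo_P [N HN] := H e e0; exists N => n Nn.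
by rewrite distrC; apply: HN.
Qed.

Section ComplexPart.
Local Open Scope complex_scope.

Lemma normc_ge (R : realType) (z : R[i]) :
  `|complex.Re z| <= complex.Re `|z| /\ `|complex.Im z| <= complex.Re `|z|.
Proof.
rewrite normc_def /=; split.
  by rewrite -sqrtr_sqr ler_wsqrtr // lerDl sqr_ge0.
by rewrite -sqrtr_sqr ler_wsqrtr // lerDr sqr_ge0.
Qed.

Lemma pos_complex (R : realType) (e : R[i]) : 0 < e -> e = (complex.Re e)%:C /\ 0 < complex.Re e.
Proof.
case: e => a b; rewrite ltcE /= => /andP[/eqP -> ha]; by split.
Qed.

Lemma Kcomplete_complex (R : realType) : Kcomplete (R[i] : numFieldType).
Proof.
move=> u Hu.
have HR : forall r : R, 0 < r -> exists N, forall m n, (N <= m)%N -> (N <= n)%N ->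
   `|complex.Re (u m) - complex.Re (u n)| < r /\ `|complex.Im (u m) - complex.Im (u n)| < r.
  move=> r r0; have [|N HN] := Hu r%:C; first by rewrite ltcR.
  exists N => m n Nm Nn; have := HN m n Nm Nn.
  have [h1 h2] := normc_ge (u m - u n).
  rewrite [`|u m - u n|]normc_def ltcR => h.
  rewrite normc_def /= in h1 h2.
  by rewrite -!raddfB /=; split; apply: le_lt_trans h; [exact h1 | exact h2].
have [lx Hx] : exists lx, limK (fun n => complex.Re (u n)) lx.
  apply: Kcomplete_real => r r0; have [N HN] := HR r r0; exists N => m n Nm Nn.
  by case: (HN m n Nm Nn).
have [ly Hy] : exists ly, limK (fun n => complex.Im (u n)) ly.
  apply: Kcomplete_real => r r0; have [N HN] := HR r r0; exists N => m n Nm Nn.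
  by case: (HN m n Nm Nn).
exists (lx +i* ly) => e /pos_complex [-> r0].
set r := complex.Re e in r0 *.
have r2 : 0 < r / 2 by rewrite divr_gt0.
have [N1 H1] := Hx _ r2; have [N2 H2] := Hy _ r2.
exists (maxn N1 N2) => n Nn.
have h1 := H1 n (leq_trans (leq_maxl _ _) Nn).
have h2 := H2 n (leq_trans (leq_maxr _ _) Nn).
rewrite normc_def ltcR -/r !raddfB /=.
rewrite -[X in _ < X](ger0_norm (ltW r0)) -sqrtr_sqr ltr_sqrt; last first.
  by rewrite exprn_gt0.
move: h1 h2; rewrite !ltr_norml => /andP[? ?] /andP[? ?].
rewrite /= in r0 *.
nra.
Qed.

End ComplexPart.

Lemma L0 (K : numFieldType) (X : topologicalLmodType K) (l : K) (x : X) (U : set X) :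
  nbhs (l *: x) U -> exists2 A1 : set K, nbhs (l : K^o) A1 &
     exists2 A2 : set X, nbhs x A2 & forall t m, A1 t -> A2 m -> U (t *: m).
Proof.
move=> HU.
have := @scale_continuous K X (l, x) _ HU.
move=> /= [[A1 A2] /= [H1 H2] HA].
exists A1 => //; exists A2 => // t m h1 h2.
by apply: (HA (t, m)).
Qed.
Lemma L0b (K : numFieldType) (X : topologicalLmodType K) (l : K) (x : X) (U : set X) :
  nbhs (l *: x) U -> exists2 del : K, 0 < del &
     exists2 A2 : set X, nbhs x A2 & forall t m, `|l - t| < del -> A2 m -> U (t *: m).
Proof.
move=> /L0 [A1 /nbhs_ballP [del del0 Hd] [A2 HA2 H]].
exists del => //; exists A2 => // t m ht hm; apply: H => //; apply: Hd.
by rewrite /ball /=.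
Qed.

Definition spn (K : numFieldType) (V : lmodType K) (k : nat) (v : 'I_k -> V) : set V :=
  [set y | exists c : 'I_k -> K, y = \sum_(i < k) c i *: v i].

Definition extc (K : Type) k (c : 'I_k -> K) (a : K) : 'I_k.+1 -> K :=
  fun i => if unlift ord_max i is Some j then c j else a.

Lemma lift_widen k (j : 'I_k) : lift ord_max j = widen_ord (leqnSn k) j.
Proof. apply: val_inj; exact: lift_max. Qed.

Lemma extc_widen K k c a (j : 'I_k) : @extc K k c a (widen_ord (leqnSn k) j) = c j.
Proof. by rewrite /extc -lift_widen liftK. Qed.

Lemma extc_max K k c a : @extc K k c a ord_max = a.
Proof. by rewrite /extc unlift_none. Qed.

Lemma sum_split (K : numFieldType) (V : lmodType K) k (c : 'I_k.+1 -> K) (v : 'I_k.+1 -> V) :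
  \sum_(i < k.+1) c i *: v i =
  \sum_(j < k) c (widen_ord (leqnSn k) j) *: v (widen_ord (leqnSn k) j) + c ord_max *: v ord_max.
Proof. by rewrite big_ord_recr. Qed.

Lemma sum_extc (K : numFieldType) (V : lmodType K) k (c : 'I_k -> K) a (v : 'I_k.+1 -> V) :
  \sum_(i < k.+1) extc c a i *: v i =
  \sum_(j < k) c j *: v (widen_ord (leqnSn k) j) + a *: v ord_max.
Proof. by rewrite sum_split extc_max; under eq_bigr do rewrite extc_widen. Qed.

Lemma steinitz (K : numFieldType) (V : lmodType K) k (dv : 'I_k -> V) (u : 'I_k.+1 -> V) :
  (forall j, spn dv (u j)) -> ~ lin_indep u.
Proof.
move=> Hu Hind.
have [A HA] := choice Hu.
pose M := \matrix_(j < k.+1, i < k) A j i.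
have Hk : kermx M != 0.
  rewrite -mxrank_eq0 mxrank_ker.
  have := rank_leq_col M.
  by rewrite subn_eq0 -ltnNge ltnS.
have [i [j Hij]] : exists i j, kermx M i j != 0.
  case: (pselect (exists i j, kermx M i j != 0)) => // H; exfalso.
  move/eqP: Hk; apply; apply/matrixP => i j; rewrite [in RHS]mxE; apply/eqP.
  case: (eqVneq (kermx M i j) 0) => // h; exfalso; apply: H; exists i; exists j; exact: h.
pose c := row i (kermx M).
have cM : c *m M = 0 by rewrite -row_mul mulmx_ker row0.
have := Hind (fun j => c 0 j).
have -> : \sum_(j < k.+1) c 0 j *: u j = 0.
  transitivity (\sum_(i0 < k) (c *m M) 0 i0 *: dv i0); last first.
    by rewrite cM big1 // => ? _; rewrite mxE scale0r.
  under eq_bigr => j0 _ do rewrite (HA j0) scaler_sumr.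
  rewrite exchange_big /=; apply: eq_bigr => i0 _.
  rewrite [(c *m M) 0 i0]mxE scaler_suml; apply: eq_bigr => j0 _.
  by rewrite [M j0 i0]mxE scalerA.
move=> /(_ erefl j) /eqP; by rewrite [c 0 j]mxE (negbTE Hij).
Qed.

Lemma dense_closure (T : topologicalType) (D : set T) y : dense D -> closure D y.
Proof.
move=> HD B; rewrite nbhsE => -[B' [oB' B'y] sB].
have [|z [B'z Dz]] := HD B' _ oB'; first by exists y.
by exists z; split => //; apply: sB.
Qed.

Lemma archi (R : realType) (r : R) : 0 < r -> exists N, forall n, (N <= n)%N -> n.+1%:R^-1 < r.
Proof.
move=> r0; have /near_oo_P [N HN] := @near_infty_natSinv_lt R (PosNum r0).
by exists N.
Qed.

Section FinDim.
Context (R : realType) (K : numFieldType) (X : topologicalLmodType K) (d : X -> X -> R).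
Hypothesis d0 : forall x y, 0 <= d x y.
Hypothesis dE : forall x y, d x y = 0 <-> x = y.
Hypothesis dC : forall x y, d x y = d y x.
Hypothesis dT : forall x y z, d x z <= d x y + d y z.
Hypothesis dI : forall x y z, d (x + z) (y + z) = d x y.
Hypothesis dN : forall (x : X) (A : set X),
  nbhs x A <-> exists2 e : R, 0 < e & [set y | d x y < e] `<=` A.
Hypothesis Kc : Kcomplete K.

Lemma ball_nbhs x (r : R) : 0 < r -> nbhs x [set y | d x y < r].
Proof. by move=> r0; apply/dN; exists r. Qed.

Lemma closure_seq (A : set X) y : closure A y ->
  exists s : nat -> X, forall n, A (s n) /\ d y (s n) < n.+1%:R^-1.
Proof.
move=> Hy.
have H n : exists z, A z /\ d y z < n.+1%:R^-1.
  have hpos : 0 < n.+1%:R^-1 :> R by rewrite invr_gt0 ltr0Sn.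
  have [z [Az Bz]] := Hy _ (ball_nbhs y hpos).
  by exists z.
have [s Hs] := choice H; by exists s.
Qed.

Lemma closed0 : closed [set (0:X)].
Proof.
move=> y Hy /=.
case: (eqVneq (d y 0) 0) => [/dE //|dn].
have hpos : 0 < d y 0 by rewrite lt_neqAle eq_sym dn d0.
have [z [/= -> Bz]] := Hy _ (ball_nbhs y hpos).
by rewrite /= ltxx in Bz.
Qed.

Lemma key k (w : 'I_k -> X) (u : X) : closed (spn w) -> ~ spn w u ->
  exists2 U : set X, nbhs 0 U & exists2 C : K, 0 < C &
    forall c a, U (\sum_(i < k) c i *: w i + a *: u) -> `|a| < C.
Proof.
move=> Wc Wu.
have [B HB HBW] : exists2 B, nbhs u B & forall z, B z -> ~ spn w z.
  case: (pselect (exists2 B, nbhs u B & forall z, B z -> ~ spn w z)) => // H.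
  exfalso; apply: Wu; apply: Wc => B nB.
  case: (pselect ((spn w `&` B) !=set0)) => // H2; exfalso; apply: H.
  by exists B => // z Bz Wz; apply: H2; exists z.
have [r r0 Hr] := (dN u B).1 HB.
have : nbhs (0 *: (0:X)) [set y | d 0 y < r] by rewrite scale0r; exact: ball_nbhs.
move=> /L0b [del del0 [A2 HA2 H]].
exists A2 => //; exists (2 / del); first by rewrite divr_gt0.
move=> c a Hm.
have Cpos : 0 < 2 / del by rewrite divr_gt0.
case: (boolP (`|a| < 2 / del)) => // Hn; exfalso.
have Ha : 2 / del <= `|a|.
  by rewrite real_leNgt ?Hn // ?normr_real // gtr0_real.
have a0 : a != 0 by rewrite -normr_gt0; apply: lt_le_trans Ha.
have Hai : `|0 - a^-1| < del.
  rewrite sub0r normrN normrV ?unitfE //.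
  have : `|a|^-1 <= (2 / del)^-1.
    by rewrite lef_pV2 ?posrE ?normr_gt0.
  rewrite invf_div => h; apply: le_lt_trans h _.
  by rewrite ltr_pdivrMr // ltr_pMr // ltr1n.
have := H _ _ Hai Hm; rewrite /=.
pose z := \sum_(i < k) (- (a^-1 * c i)) *: w i.
have Wz : spn w z by exists (fun i => - (a^-1 * c i)).
have -> : a^-1 *: (\sum_(i < k) c i *: w i + a *: u) = u - z.
  rewrite scalerDr scalerA mulVf // scale1r addrC; congr (_ + _).
  rewrite /z -sumrN scaler_sumr; apply: eq_bigr => i _.
  by rewrite scaleNr opprK scalerA.
rewrite dC -(dI _ _ z) subrK add0r => hd.
exact: (HBW z (Hr _ hd) Wz).
Qed.

Lemma comb_sub k (w : 'I_k -> X) u (l : K) (c c' : 'I_k -> K) a a' :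
  l *: ((\sum_(i < k) c i *: w i + a *: u) - (\sum_(i < k) c' i *: w i + a' *: u)) =
  \sum_(i < k) (l * (c i - c' i)) *: w i + (l * (a - a')) *: u.
Proof.
rewrite opprD addrACA -sumrB -scalerBl scalerDr scalerA; congr (_ + _).
rewrite scaler_sumr; apply: eq_bigr => i _.
by rewrite -scalerBl scalerA.
Qed.

Lemma spn_closed k (v : 'I_k -> X) : lin_indep v -> closed (spn v).
Proof.
elim: k v => [|k IH] v Hv.
  have -> : spn v = [set 0].
    rewrite /spn; apply/seteqP; split => y /=.
      by move=> [c ->]; rewrite big_ord0.
    by move=> ->; exists (fun=> 0); rewrite big_ord0.
  exact: closed0.
pose w := fun j : 'I_k => v (widen_ord (leqnSn k) j).
pose u := v ord_max.
have Hw : lin_indep w.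
  move=> c Hc j; have := Hv (extc c 0); rewrite sum_extc scale0r addr0.
  move=> /(_ Hc (widen_ord (leqnSn k) j)); by rewrite extc_widen.
have Wc := IH w Hw.
have Wu : ~ spn w u.
  move=> [c Hc]; have := Hv (extc (fun j => - c j) 1).
  rewrite sum_extc scale1r.
  under eq_bigr do rewrite scaleNr.
  rewrite sumrN -/u -/w.
  have -> : \sum_(i < k) c i *: w i = u by rewrite Hc.
  rewrite addNr => /(_ erefl ord_max); rewrite extc_max => /eqP.
  by rewrite oner_eq0.
have [U HU [C C0 HC]] := key Wc Wu.
move=> y Hy.
have [s Hs] := closure_seq Hy.
have [f Hf] := choice (fun n => proj1 (Hs n)).
have Hf' n : s n = \sum_(j < k) f n (widen_ord (leqnSn k) j) *: w j + f n ord_max *: u.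
  by rewrite (Hf n) sum_split.
pose a n := f n ord_max.
have Ha : cauchyK a.
  move=> e e0.
  have : nbhs (0:X) [set z | U ((C / e) *: z)].
    have : nbhs ((C / e) *: (0:X)) U by rewrite scaler0.
    move=> /L0b [del del0 [A2 HA2 H]].
    apply: filterS HA2 => z Hz; apply: H => //; by rewrite subrr normr0.
  move=> /(dN 0) [r r0 Hr].
  have r2 : 0 < r / 2 by rewrite divr_gt0.
  have [N HN] := archi r2.
  exists N => p q Np Nq.
  have Hpq : d 0 (s p - s q) < r.
    rewrite -(dI _ _ (s q)) add0r subrK.
    apply: le_lt_trans (dT _ y _) _.
    rewrite [d (s q) y]dC.
    have := (Hs q).2; have := (Hs p).2; have := HN p Np; have := HN q Nq.
    move=> h1 h2 h3 h4; rewrite [X in _ < X](splitr r); apply: ltrD; [exact: lt_trans h4 h1 | exact: lt_trans h3 h2].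
  have := Hr _ Hpq; rewrite /= !Hf' comb_sub => /HC.
  have Cepos : 0 < C / e by rewrite divr_gt0.
  rewrite normrM (gtr0_norm Cepos) -[X in _ < X](divfK (lt0r_neq0 e0)) ltr_pM2l //.
have [al Hal] := Kc Ha.
have Hyu : spn w (y - al *: u).
  apply: Wc => B HB.
  have [r r0 Hr] := (dN _ B).1 HB.
  have r2 : 0 < r / 2 by rewrite divr_gt0.
  have : nbhs (0 *: u) [set z | d 0 z < r / 2] by rewrite scale0r; exact: ball_nbhs.
  move=> /L0b [del del0 [A2 HA2 H]].
  have [N1 HN1] := Hal _ del0.
  have [N2 HN2] := archi r2.
  pose n := maxn N1 N2.
  exists (s n - a n *: u); split.
    exists (fun j => f n (widen_ord (leqnSn k) j)); by rewrite Hf' addrK.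
  apply: Hr => /=.
  apply: le_lt_trans (dT _ (s n - al *: u) _) _.
  rewrite dI.
  have -> : d (s n - al *: u) (s n - a n *: u) = d 0 ((a n - al) *: u).
    rewrite [s n - _]addrC [s n - a n *: u]addrC dI.
    rewrite -(dI _ _ (a n *: u)) addNr dC; congr (d 0 _).
    by rewrite scalerBl addrC.
  have h1 : d 0 ((a n - al) *: u) < r / 2.
    apply: (H _ u); last exact: nbhs_singleton.
    by rewrite sub0r normrN; apply: HN1; rewrite leq_maxl.
  have h2 := HN2 n (leq_maxr _ _).
  have h3 := (Hs n).2.
  rewrite [X in _ < X](splitr r); apply: ltrD => //; exact: lt_trans h3 h2.
case: Hyu => g Hg.
exists (extc g al); rewrite sum_extc -/u.
by rewrite -Hg subrK.
Qed.

Lemma dense_infdim (D : set X) : dense D -> infinite_dimensional X ->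
  forall n, exists v : 'I_n -> X, (forall i, D (v i)) /\ lin_indep v.
Proof.
move=> HD Hinf; elim=> [|n [v [Dv Iv]]].
  by exists (fun _ => 0); split => [[]|c _ []].
have [z [Dz Nz]] : exists z, D z /\ ~ spn v z.
  case: (pselect (exists z, D z /\ ~ spn v z)) => // H; exfalso.
  have Hall : forall y, spn v y.
    move=> y; apply: (spn_closed Iv) => B HB.
    have [z [Dz Bz]] := dense_closure HD HB.
    exists z; split => //; case: (pselect (spn v z)) => // Hz; exfalso; apply: H.
    by exists z.
  have [u Iu] := Hinf n.+1.
  exact: (steinitz (fun j => Hall (u j)) Iu).
exists (extc v z); split.
  by move=> i; rewrite /extc; case: (unlift ord_max i).
move=> c; rewrite sum_split extc_max.
under eq_bigr do rewrite extc_widen.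
move=> Hc.
have cmax : c ord_max = 0.
  case: (eqVneq (c ord_max) 0) => // cn; exfalso; apply: Nz.
  exists (fun j => - ((c ord_max)^-1 * c (widen_ord (leqnSn n) j))).
  apply: (scalerI cn).
  have -> : c ord_max *: z = - \sum_(j < n) c (widen_ord (leqnSn n) j) *: v j.
    by apply/eqP; rewrite -addr_eq0 addrC Hc.
  rewrite scaler_sumr -sumrN; apply: eq_bigr => j _.
  by rewrite scalerA mulrN mulrA mulfV // mul1r scaleNr.
have Hc' := Hc; rewrite cmax scale0r addr0 in Hc'.
move=> i; case: (unliftP ord_max i) => [j ->|->] //.
rewrite lift_widen; exact: (Iv _ Hc' j).
Qed.

End FinDim.

Section Comm.
Context (K : numFieldType) (X : topologicalLmodType K) (T : {linear X -> X}).
Hypothesis Tcont : continuous T.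

Lemma iter_comm (S : X -> X) : S \o T = T \o S -> forall n z, iter n T (S z) = S (iter n T z).
Proof.
move=> HS; elim=> [|n IH] z //=.
by rewrite IH; have := congr1 (fun h => h (iter n T z)) HS.
Qed.

Lemma iter_cont n : continuous (iter n T).
Proof.
elim: n => [|n IH] x /=; first exact: cvg_id.
rewrite (_ : iter n.+1 T = T \o iter n T) //.
apply: continuous_comp; [exact: IH | exact: Tcont].
Qed.

Lemma comm_iter n : commutant T (iter n T).
Proof.
split; first exact: iter_cont.
by apply: funext => z /=; rewrite -iterSr -iterS.
Qed.

Lemma comm_add (S1 S2 : X -> X) : commutant T S1 -> commutant T S2 ->
  commutant T (fun z => S1 z + S2 z).
Proof.
move=> [c1 h1] [c2 h2]; split.
  move=> x.
  apply: (@continuous_comp _ _ _ (fun z => (S1 z, S2 z)) (fun p : X * X => p.1 + p.2)).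
    exact: cvg_pair (c1 x) (c2 x).
  exact: add_continuous.
apply: funext => z /=; rewrite linearD.
by have := congr1 (fun h => h z) h1; have := congr1 (fun h => h z) h2 => /= -> ->.
Qed.

Lemma comm_scale (a : K) (S : X -> X) : commutant T S -> commutant T (fun z => a *: S z).
Proof.
move=> [c h]; split.
  move=> x.
  apply: (@continuous_comp _ _ _ (fun z => ((a : K^o), S z)) (fun p : K^o * X => p.1 *: p.2)).
    exact: cvg_pair (cvg_cst _) (c x).
  exact: scale_continuous.
apply: funext => z /=; rewrite linearZ.
by have := congr1 (fun h => h z) h => /= ->.
Qed.

Lemma comm_zero : commutant T (fun _ => 0).
Proof.
split; first exact: cst_continuous.
by apply: funext => z /=; rewrite linear0.
Qed.

Lemma comm_lincomb n (c : 'I_n -> K) (m : 'I_n -> nat) :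
  commutant T (fun z => \sum_(i < n) c i *: iter (m i) T z).
Proof.
elim: n c m => [|n IH] c m.
  have -> : (fun z : X => \sum_(i < 0) c i *: iter (m i) T z) = fun _ => 0.
    by apply: funext => z; rewrite big_ord0.
  exact: comm_zero.
have -> : (fun z : X => \sum_(i < n.+1) c i *: iter (m i) T z) =
   fun z => \sum_(i < n) c (widen_ord (leqnSn n) i) *: iter (m (widen_ord (leqnSn n) i)) T z
          + c ord_max *: iter (m ord_max) T z.
  by apply: funext => z; rewrite big_ord_recr.
apply: comm_add; first exact: IH.
apply: comm_scale; exact: comm_iter.
Qed.

Lemma dense_sub (Y : topologicalType) (A B : set Y) : dense A -> A `<=` B -> dense B.
Proof.
move=> HA AB O O0 oO; have [z [Oz Az]] := HA O O0 oO.
by exists z; split => //; apply: AB.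
Qed.

Lemma orbit_span_sub x : orbit_span T x `<=` commutant_orbit T x.
Proof.
move=> y [n [c [m ->]]].
exists (fun z => \sum_(i < n) c i *: iter (m i) T z) => //.
exact: comm_lincomb.
Qed.

Lemma hyper_rec (F : set (set nat)) (x : X) : Furstenberg_family F ->
  F_hypercyclic F T x -> F_recurrent F T x /\ dense (commutant_orbit T x).
Proof.
move=> [Finf Fup _] Hx; split.
  move=> U; rewrite nbhsE => -[B [oB Bx] BU].
  apply: (Fup (return_set T x B)); first by apply: Hx => //; exists x.
  by move=> n; apply: BU.
move=> O O0 oO.
have Hinf := Finf _ (Hx O oO O0).
case: (pselect (return_set T x O !=set0)) => [[n On]|H]; last first.
  exfalso; apply: Hinf.
  rewrite (_ : return_set T x O = set0); first exact: finite_set0.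
  by apply/seteqP; split => n //= On; apply: H; exists n.
exists (iter n T x); split => //; exists (iter n T) => //; exact: comm_iter.
Qed.

End Comm.

Lemma Kc_RorC (R : realType) b : Kcomplete (RorC R b).
Proof. by case: b; [exact: Kcomplete_real | exact: Kcomplete_complex]. Qed.

Lemma iter_diag (Y : Type) N (f : Y -> Y) n (v : power_space Y N) :
  iter n (diag_op f) v = fun i => iter n f (v i).
Proof. by elim: n => //= n ->. Qed.

Lemma ptws_cvg N (Y : topologicalType) (G : set_system (power_space Y N)) (v : power_space Y N) :
  Filter G -> (forall i, (fun g : power_space Y N => g i) @ G --> v i) -> G --> v.
Proof.
move=> FG H.
apply/(@cvg_sup _ _ (fun i => Topological.class (initial_topology (fun f : power_space Y N => f i)))) => // i.
apply/cvg_image => //.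
  apply/seteqP; split => y // _; by exists (fun _ => y).
move=> B HB; have := H i B HB => /= HGB.
exists ((fun g : power_space Y N => g i) @^-1` B) => //.
apply: image_preimage; apply/seteqP; split => y // _; by exists (fun _ => y).
Qed.

Theorem mainTheorem17 (R : realType) (b : bool)
  (X : topologicalLmodType (RorC R b))
  (HF : Fspace R X) (Hsep : separable_space X)
  (Hinf : infinite_dimensional X)
  (T : {linear X -> X}) (Tcont : continuous T)
  (F : set (set nat)) (HFam : Furstenberg_family F) :
  ((exists x : X, F_recurrent F T x /\ dense (commutant_orbit T x)) \/
   (exists x : X, F_recurrent F T x /\ cyclic_vector T x) \/
   (exists x : X, F_hypercyclic F T x)) ->
  forall N : nat, (0 < N)%N ->
    exists S : set ('I_N -> X),
      [/\ is_subspace S, infdim_subspace S,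
          @dense (power_space X N) S &
          S `<=` FRec F (@diag_op X N T)].
Proof.
move=> Hyp N HN.
have [x [Hrec Hdense]] : exists x : X, F_recurrent F T x /\ dense (commutant_orbit T x).
  case: Hyp => [//|[[x [Hr Hc]]|[x Hh]]].
    exists x; split => //; apply: (@dense_sub _ (orbit_span T x)); [exact: Hc | exact: orbit_span_sub].
  by exists x; apply: hyper_rec.
have [d [d0 [dE [dC [dT [dI [dN _]]]]]]] := HF.
have Kc := @Kc_RorC R b.
pose D := commutant_orbit T x.
have D0 : D 0 by exists (fun _ => 0) => //; exact: comm_zero.
have DA : forall y1 y2, D y1 -> D y2 -> D (y1 + y2).
  move=> _ _ [S1 c1 <-] [S2 c2 <-]; exists (fun z => S1 z + S2 z) => //.
  exact: comm_add.
have DZ : forall a y, D y -> D (a *: y).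
  move=> a _ [S1 c1 <-]; exists (fun z => a *: S1 z) => //.
  exact: comm_scale.
pose S := [set v : 'I_N -> X | forall i, D (v i)].
exists S; split.
- split; first by move=> i; exact: D0.
    by move=> u v Hu Hv i; apply: DA.
  by move=> a u Hu i; apply: DZ.
- move=> n.
  have [v [Dv Iv]] := dense_infdim d0 dE dC dT dI dN Kc Hdense Hinf n.
  pose i0 : 'I_N := Ordinal HN.
  exists (fun j => fun i => if i == i0 then v j else 0); split.
    by move=> j i; case: ifP => _; [exact: Dv | exact: D0].
  move=> c Hc; apply: Iv.
  have := congr1 (fun f => f i0) Hc; rewrite fct_sumE /=.
  move=> H; rewrite -[RHS](_ : (0 : 'I_N -> X) i0 = 0) // -H; apply: eq_bigr => j _.
- move=> O [v Ov] oO.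
  have H1 : forall i, exists s : nat -> X, forall n, D (s n) /\ d (v i) (s n) < n.+1%:R^-1.
    move=> i; apply: (closure_seq dN); exact: dense_closure.
  have [s Hs] := choice H1.
  pose w n := (fun i => s i n) : power_space X N.
  have Hw : w @ \oo --> (v : power_space X N).
    apply: ptws_cvg => i B /dN [r r0 Hr].
    have [N0 HN0] := archi r0.
    apply/near_oo_P; exists N0 => n Nn; apply: Hr => /=.
    by apply: lt_trans (HN0 n Nn); exact: (Hs i n).2.
  have /Hw /near_oo_P [N0 HN0] : nbhs (v : power_space X N) O.
    exact: open_nbhs_nbhs.
  exists (w N0); split; first exact: HN0.
  by move=> i; exact: (Hs i N0).1.
- move=> v Hv.
  have H' : forall i, exists S0, commutant T S0 /\ S0 x = v i.
    by move=> i; case: (Hv i) => S0 ? ?; exists S0.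
  have [Sf HSf] := choice H'.
  pose phi z := (fun i => Sf i z) : power_space X N.
  have phix : phi x = v by apply: funext => i; exact: (HSf i).2.
  have phic : phi @ nbhs x --> (phi x : power_space X N).
    apply: ptws_cvg => i; exact: (HSf i).1.1 x.
  move=> U; rewrite -phix => HU.
  have Hpre := phic _ HU.
  case: HFam => _ Fup _.
  apply: Fup (Hrec _ Hpre) _ => n /= Un.
  rewrite /return_set /= iter_diag; rewrite /return_set /= in Un.
  suff -> : (fun i => iter n T (phi x i)) = phi (iter n T x) by [].
  apply: funext => i; rewrite /phi iter_comm //; exact: (HSf i).1.2.
Qed.
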